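(* As solutions to the system $S_1=S_2=S_3=T_1=T_2=T_3=0$ (with $S_i,T_i$ as defined in the context), the functions $r,a_1,a_2,b_3$ cannot depend on jet coordinates other than $t,x,u,u_x,u_{xx}$, whereas the functions $b_1,b_2$ cannot depend on jet coordinates other than $t,x,u,u_x,u_{xx},u_{xxx}$.
   Context: Consider a second order scalar evolution equation $u_t = F(t,x,u,u_x,u_{xx})$ with $\partial F/\partial u_{xx} \ne 0$, on its equation manifold with jet coordinates $t,x,u,u_x,u_{xx},u_{xxx},\dots$ and total derivatives $D_x, D_t$. Suppose it has an $\mathfrak{sl}_2$-valued zero-curvature representation $A\,dx + B\,dt$, i.e. $D_t A - D_x B + [A,B] = 0$ on the equation, with characteristic matrix $R$ in the semisimple case: after gauge, $R=\mathrm{diag}(r,-r)$ and $A = \begin{pmatrix} a_1 & a_2 \\ a_2 & -a_1\end{pmatrix}$, $B = \begin{pmatrix} b_1 & b_2+b_3 \\ b_2-b_3 & -b_1\end{pmatrix}$, with $a_2 \ne 0$. The zero-curvature condition and the characteristic-matrix equation then read $S_i = 0 = T_i$, $i=1,2,3$, where $S_1 = -D_t a_1 + D_x b_1 + 2 a_2 b_3$, $S_2 = -D_t a_2 + D_x b_2 - 2 a_1 b_3$, $S_3 = D_x b_3 + 2 a_2 b_1 - 2 a_1 b_2$, $T_1 = -D_t r - \frac{\partial F}{\partial u} r + D_x(\frac{\partial F}{\partial u_x} r) - D_x^2(\frac{\partial F}{\partial u_{xx}} r) - 4 \frac{\partial F}{\partial u_{xx}} r a_2^2$, $T_2 = -b_3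 + 2 \frac{\partial F}{\partial u_{xx}} a_1 a_2$, $T_3 = -b_2 + \frac{\partial F}{\partial u_x} a_2 - 2 D_x(\frac{\partial F}{\partial u_{xx}}) a_2 - 2 \frac{D_x r}{r} \frac{\partial F}{\partial u_{xx}} a_2 - \frac{\partial F}{\partial u_{xx}} D_x a_2$. *)

(* Defs.v *)
From HB Require Import structures.
From mathcomp Require Import all_boot all_order all_algebra.
From mathcomp Require Import all_classical all_reals all_analysis.
Set Implicit Arguments. Unset Strict Implicit. Unset Printing Implicit Defensive.
Import Order.TTheory GRing.Theory Num.Theory.
Import numFieldNormedType.Exports.
Local Open Scope classical_set_scope.
Local Open Scope ring_scope.

(* Jet space with coordinates indexed by nat:
     0 = t, 1 = x, (k+2) = u_k  (u_0 = u, u_1 = u_x, u_2 = u_xx, u_3 = u_xxx, ...) *)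
Definition jet (R : realType) := nat -> R.

Definition depends_below (R : realType) (N : nat) (f : jet R -> R) : Prop :=
  forall p q : jet R, (forall i, (i < N)%N -> p i = q i) -> f p = f q.

Definition upd (R : realType) (p : jet R) (i : nat) (s : R) : jet R :=
  fun j => if j == i then s else p j.

Definition pd (R : realType) (i : nat) (f : jet R -> R) : jet R -> R :=
  fun p => derive1 (fun s => f (upd p i s)) (p i).

Definition ext (R : realType) (N : nat) (v : 'rV[R]_N) : jet R :=
  fun i => if insub i is Some j then v ord0 j else 0.

Definition iter_partial (R : realType) (N : nat) (l : seq 'I_N)
  (g : 'rV[R]_N -> R) : 'rV[R]_N -> R :=
  foldr (fun i h => 'D_(delta_mx ord0 i) h) g l.

Definition smoothN (R : realType) (N : nat) (g : 'rV[R]_N -> R) : Prop :=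
  forall (l : seq 'I_N) (v : 'rV[R]_N), differentiable (iter_partial l g) v.

Definition smooth_dfun (R : realType) (f : jet R -> R) : Prop :=
  exists N, depends_below N f /\ smoothN (fun v : 'rV[R]_N => f (ext v)).

Definition dbound (R : realType) (f : jet R -> R) : nat :=
  xget 0%N [set N | depends_below N f].

(* total x-derivative  D_x = d/dx + sum_k u_{k+1} d/du_k *)
Definition Dx (R : realType) (f : jet R -> R) : jet R -> R :=
  fun p => pd 1 f p + \sum_(k < dbound f) p k.+3 * pd k.+2 f p.

(* total t-derivative on the equation manifold of u_t = F:
   D_t = d/dt + sum_k D_x^k(F) d/du_k *)
Definition Dt (R : realType) (F f : jet R -> R) : jet R -> R :=
  fun p => pd 0 f p + \sum_(k < dbound f) iter k (@Dx R) F p * pd k.+2 f p.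

Definition Fu (R : realType) (F : jet R -> R) := pd 2 F.
Definition Fux (R : realType) (F : jet R -> R) := pd 3 F.
Definition Fuxx (R : realType) (F : jet R -> R) := pd 4 F.

Definition S1 (R : realType) (F a1 a2 b1 b2 b3 : jet R -> R) : jet R -> R :=
  fun p => - Dt F a1 p + Dx b1 p + 2 * a2 p * b3 p.
Definition S2 (R : realType) (F a1 a2 b1 b2 b3 : jet R -> R) : jet R -> R :=
  fun p => - Dt F a2 p + Dx b2 p - 2 * a1 p * b3 p.
Definition S3 (R : realType) (F a1 a2 b1 b2 b3 : jet R -> R) : jet R -> R :=
  fun p => Dx b3 p + 2 * a2 p * b1 p - 2 * a1 p * b2 p.
Definition T1 (R : realType) (F r a2 : jet R -> R) : jet R -> R :=
  fun p => - Dt F r p - Fu F p * r p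
           + Dx (fun q => Fux F q * r q) p
           - Dx (Dx (fun q => Fuxx F q * r q)) p
           - 4 * Fuxx F p * r p * a2 p ^+ 2.
Definition T2 (R : realType) (F a1 a2 b3 : jet R -> R) : jet R -> R :=
  fun p => - b3 p + 2 * Fuxx F p * a1 p * a2 p.
Definition T3 (R : realType) (F r a2 b2 : jet R -> R) : jet R -> R :=
  fun p => - b2 p + Fux F p * a2 p - 2 * Dx (Fuxx F) p * a2 p
           - 2 * (Dx r p / r p) * Fuxx F p * a2 p - Fuxx F p * Dx a2 p.

(* Main.v *)
Require Import Defs.
From HB Require Import structures.
From mathcomp Require Import all_boot all_order all_algebra.
From mathcomp Require Import all_classical all_reals all_analysis.
From mathcomp Require Import ring lra zify.
Import Order.TTheory GRing.Theory Num.Theory.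
Import numFieldNormedType.Exports.
Local Open Scope ring_scope.
Set Implicit Arguments. Unset Strict Implicit. Unset Printing Implicit Defensive.

Section J.
Variable R : realType.
Implicit Types (f g h : jet R -> R) (p q : jet R).

Definition Ind i f := forall p s, f (upd p i s) = f p.
Definition Dv i f := forall p, derivable (fun s => f (upd p i s)) (p i) 1.

Lemma upd_at p i s : upd p i s i = s.
Proof. by rewrite /upd eqxx. Qed.
Lemma upd_ne p i s j : j != i -> upd p i s j = p j.
Proof. by rewrite /upd => /negbTE ->. Qed.
Lemma upd_id p i : upd p i (p i) = p.
Proof. by apply/funext => j; rewrite /upd; case: eqP => // ->. Qed.
Lemma upd_upd p i s t : upd (upd p i s) i t = upd p i t.
Proof. by apply/funext => j; rewrite /upd; case: (j == i). Qed.
Lemma upd_C p i j s t : i != j -> upd (upd p i s) j t = upd (upd p j t) i s.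
Proof.
move=> nij; apply/funext => k; rewrite /upd.
case: eqP => [->|_]; last by [].
by rewrite eq_sym (negbTE nij).
Qed.

Lemma aff_is_derive (c d x : R) : is_derive x 1 (fun s : R => s * c + d) c.
Proof.
have H : is_derive x (1:R) ((@id R) * cst c + cst d) (x *: 0 + c *: 1 + 0).
  by apply: is_deriveD.
rewrite scaler0 add0r addr0 in H.
have e : c *: (1:R) = c by rewrite scaler1.
by rewrite e in H.
Qed.

Lemma pd_sec f i p (g : R -> R) : (forall s, f (upd p i s) = g s) ->
  pd i f p = derive1 g (p i).
Proof. by move=> H; rewrite /pd; congr (derive1 _ _); apply/funext => s. Qed.

Lemma pd_aff f i p c d : (forall s, f (upd p i s) = s * c + d) -> pd i f p = c.
Proof.
move=> H; rewrite (pd_sec H) derive1E.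
by case: (aff_is_derive c d (p i)).
Qed.

Lemma Ind_pd0 i f p : Ind i f -> pd i f p = 0.
Proof.
move=> H; apply: (@pd_aff _ _ _ 0 (f p)) => s.
by rewrite mulr0 add0r H.
Qed.

Lemma below_Ind K i f : depends_below K f -> (K <= i)%N -> Ind i f.
Proof.
move=> H Ki p s; apply: H => j jK; rewrite /upd; case: eqP => // E.
by subst j; move: (leq_trans jK Ki); rewrite ltnn.
Qed.

Lemma below_mono K K' f : depends_below K f -> (K <= K')%N -> depends_below K' f.
Proof. by move=> H KK p q E; apply: H => j jK; apply: E; apply: leq_trans KK. Qed.

Lemma below_pd K j f : depends_below K f -> depends_below K (pd j f).
Proof.
move=> H p q E; case: (ltnP j K) => jK.
  rewrite /pd (E j jK); congr (derive1 _ _); apply/funext => s.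
  apply: H => k kK; rewrite /upd; case: (k == j) => //; exact: E.
by rewrite !Ind_pd0 //; apply: below_Ind H jK.
Qed.

Lemma Ind_pd i j f : i != j -> Ind i f -> Ind i (pd j f).
Proof.
move=> nij H p s; rewrite /pd (upd_ne _ _ (_ : j != i)); last by rewrite eq_sym.
congr (derive1 _ _); apply/funext => t; by rewrite upd_C // H.
Qed.

Lemma sum_pd_bound K f (t : nat -> R) p A B : depends_below K f ->
  (K - 2 <= A)%N -> (K - 2 <= B)%N ->
  \sum_(k < A) t k * pd k.+2 f p = \sum_(k < B) t k * pd k.+2 f p.
Proof.
move=> H hA hB.
suff E : forall A, (K - 2 <= A)%N ->
  \sum_(k < A) t k * pd k.+2 f p = \sum_(k < K - 2) t k * pd k.+2 f p.
  by rewrite (E A hA) (E B hB).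
move=> C hC; rewrite [RHS](big_ord_widen C (fun k => t k * pd k.+2 f p) hC).
rewrite [RHS]big_mkcond /=; apply: eq_bigr => k _.
case: ifP => // hk; rewrite Ind_pd0 ?mulr0 //; apply: below_Ind H _.
by move/negbT: hk; rewrite -leqNgt => hk; lia.
Qed.

Lemma dbound_below f K : depends_below K f -> depends_below (dbound f) f.
Proof. by move=> H; exact: (@xgetPex _ 0%N [set N | depends_below N f] (ex_intro _ K H)). Qed.

Lemma Dx_bound K f p : depends_below K.+2 f ->
  Dx f p = pd 1 f p + \sum_(k < K) p k.+3 * pd k.+2 f p.
Proof.
move=> H; rewrite /Dx; congr (_ + _).
have HD := dbound_below H.
rewrite (@sum_pd_bound _ _ (fun k => p k.+3) _ _ (dbound f + K) HD); try lia.
by rewrite (@sum_pd_bound _ _ (fun k => p k.+3) _ K (dbound f + K) H); try lia.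
Qed.

Lemma Dt_bound K F f p : depends_below K.+2 f ->
  Dt F f p = pd 0 f p + \sum_(k < K) iter k (@Dx R) F p * pd k.+2 f p.
Proof.
move=> H; rewrite /Dt; congr (_ + _).
have HD := dbound_below H.
rewrite (@sum_pd_bound _ _ (fun k => iter k (@Dx R) F p) _ _ (dbound f + K) HD); try lia.
by rewrite (@sum_pd_bound _ _ (fun k => iter k (@Dx R) F p) _ K (dbound f + K) H); try lia.
Qed.

Lemma below_Dx K f : depends_below K.+2 f -> depends_below K.+3 (Dx f).
Proof.
move=> H p q E; rewrite !(Dx_bound _ H).
have H' : forall j, (j < K.+2)%N -> p j = q j by move=> j jK; apply: E; lia.
congr (_ + _); first exact: below_pd H'.
apply: eq_bigr => k _; have hk := ltn_ord k; rewrite (below_pd _ H H') E //; lia.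
Qed.


Definition Aff i h c := Ind i c /\ forall p, h p = p i * c p + h (upd p i 0).
Definition Quad i h a := Ind i a /\ exists b, Ind i b /\
  forall p, h p = p i * p i * a p + p i * b p + h (upd p i 0).

Lemma Ind_cst i (c : R) : Ind i (fun _ => c).
Proof. by []. Qed.

Lemma Ind_coord i j : j != i -> Ind i (fun p => p j).
Proof. by move=> ji p s; rewrite upd_ne. Qed.

Lemma Ind_upd0 i h : Ind i (fun p => h (upd p i 0)).
Proof. by move=> p s /=; rewrite upd_upd. Qed.

Lemma Aff_intro i h c rest : Ind i c -> Ind i rest ->
  (forall p, h p = p i * c p + rest p) -> Aff i h c.
Proof.
move=> Hc Hr H; split => // p.
by rewrite [h (upd p i 0)]H upd_at mul0r add0r Hr; exact: H.
Qed.

Lemma Quad_intro i h a b rest : Ind i a -> Ind i b -> Ind i rest ->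
  (forall p, h p = p i * p i * a p + p i * b p + rest p) -> Quad i h a.
Proof.
move=> Ha Hb Hr H; split => //; exists b; split => // p.
by rewrite [h (upd p i 0)]H upd_at !mul0r !add0r Hr; exact: H.
Qed.

Lemma Aff_c i h c c' : Aff i h c -> (forall p, c p = c' p) -> Aff i h c'.
Proof. by move=> A E; have <- : c = c' by apply/funext. Qed.

Lemma Quad_c i h c c' : Quad i h c -> (forall p, c p = c' p) -> Quad i h c'.
Proof. by move=> A E; have <- : c = c' by apply/funext. Qed.

Lemma Aff_Ind i h : Ind i h -> Aff i h (fun _ => 0).
Proof. by move=> H; apply: (@Aff_intro _ _ _ h) => // p; rewrite mulr0 add0r. Qed.

Lemma Ind_of_Aff0 i h c : Aff i h c -> (forall p, c p = 0) -> Ind i h.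
Proof. by move=> [Hc H] E p s; rewrite H (H p) !E !mulr0 upd_upd. Qed.

Lemma AffD i h g c d : Aff i h c -> Aff i g d ->
  Aff i (fun p => h p + g p) (fun p => c p + d p).
Proof.
move=> [Hc H] [Hd G].
apply: (@Aff_intro _ _ _ (fun p => h (upd p i 0) + g (upd p i 0))).
- by move=> p s /=; rewrite Hc Hd.
- by move=> p s /=; rewrite !upd_upd.
- by move=> p /=; rewrite (H p) (G p); ring.
Qed.

Lemma AffB i h g c d : Aff i h c -> Aff i g d ->
  Aff i (fun p => h p - g p) (fun p => c p - d p).
Proof.
move=> [Hc H] [Hd G].
apply: (@Aff_intro _ _ _ (fun p => h (upd p i 0) - g (upd p i 0))).
- by move=> p s /=; rewrite Hc Hd.
- by move=> p s /=; rewrite !upd_upd.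
- by move=> p /=; rewrite (H p) (G p); ring.
Qed.

Lemma AffN i h c : Aff i h c -> Aff i (fun p => - h p) (fun p => - c p).
Proof.
move=> [Hc H].
apply: (@Aff_intro _ _ _ (fun p => - h (upd p i 0))).
- by move=> p s /=; rewrite Hc.
- by move=> p s /=; rewrite !upd_upd.
- by move=> p /=; rewrite (H p); ring.
Qed.

Lemma AffMl i k h c : Ind i k -> Aff i h c ->
  Aff i (fun p => k p * h p) (fun p => k p * c p).
Proof.
move=> Hk [Hc H].
apply: (@Aff_intro _ _ _ (fun p => k p * h (upd p i 0))).
- by move=> p s /=; rewrite Hc Hk.
- by move=> p s /=; rewrite !upd_upd Hk.
- by move=> p /=; rewrite (H p); ring.
Qed.

Lemma AffMr i k h c : Ind i k -> Aff i h c ->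
  Aff i (fun p => h p * k p) (fun p => c p * k p).
Proof.
move=> Hk [Hc H].
apply: (@Aff_intro _ _ _ (fun p => h (upd p i 0) * k p)).
- by move=> p s /=; rewrite Hc Hk.
- by move=> p s /=; rewrite !upd_upd Hk.
- by move=> p /=; rewrite (H p); ring.
Qed.

Lemma Aff_coord i : Aff i (fun p => p i) (fun _ => 1).
Proof. by apply: (@Aff_intro _ _ _ (fun _ => 0)) => // p; rewrite mulr1 addr0. Qed.

Lemma Aff_pd i h c p : Aff i h c -> pd i h p = c p.
Proof.
move=> [Hc H]; apply: (@pd_aff _ _ _ _ (h (upd p i 0))) => s.
by rewrite H upd_at Hc upd_upd.
Qed.

Lemma Aff_sum i n (F : nat -> jet R -> R) :
  (forall k, (k < n)%N -> exists c, Aff i (F k) c) ->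
  exists c, Aff i (fun p => \sum_(k < n) F k p) c.
Proof.
elim: n => [|n IH] H.
  exists (fun _ => 0).
  have -> : (fun p => \sum_(k < 0) F k p) = (fun _ => 0).
    by apply/funext => p; rewrite big_ord0.
  exact: Aff_Ind.
have [c Hc] := IH (fun k hk => H k (ltnW hk)).
have [d Hd] := H n (ltnSn n).
exists (fun p => c p + d p).
have E : (fun p => \sum_(k < n.+1) F k p) = (fun p => \sum_(k < n) F k p + F n p).
  by apply/funext => p; rewrite big_ord_recr.
by rewrite E; apply: AffD.
Qed.


Lemma Quad_Aff i h c : Aff i h c -> Quad i h (fun _ => 0).
Proof.
move=> [Hc H]; apply: (@Quad_intro _ _ _ c (fun p => h (upd p i 0))) => //.
  exact: Ind_upd0.
by move=> p; rewrite mulr0 add0r; exact: H.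
Qed.

Lemma QuadD i h g a a' : Quad i h a -> Quad i g a' ->
  Quad i (fun p => h p + g p) (fun p => a p + a' p).
Proof.
move=> [Ha [b [Hb H]]] [Ha' [b' [Hb' G]]].
apply: (@Quad_intro _ _ _ (fun p => b p + b' p) (fun p => h (upd p i 0) + g (upd p i 0))).
- by move=> p s /=; rewrite Ha Ha'.
- by move=> p s /=; rewrite Hb Hb'.
- by move=> p s /=; rewrite !upd_upd.
- by move=> p /=; rewrite (H p) (G p); ring.
Qed.

Lemma QuadB i h g a a' : Quad i h a -> Quad i g a' ->
  Quad i (fun p => h p - g p) (fun p => a p - a' p).
Proof.
move=> [Ha [b [Hb H]]] [Ha' [b' [Hb' G]]].
apply: (@Quad_intro _ _ _ (fun p => b p - b' p) (fun p => h (upd p i 0) - g (upd p i 0))).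
- by move=> p s /=; rewrite Ha Ha'.
- by move=> p s /=; rewrite Hb Hb'.
- by move=> p s /=; rewrite !upd_upd.
- by move=> p /=; rewrite (H p) (G p); ring.
Qed.

Lemma QuadN i h a : Quad i h a -> Quad i (fun p => - h p) (fun p => - a p).
Proof.
move=> [Ha [b [Hb H]]].
apply: (@Quad_intro _ _ _ (fun p => - b p) (fun p => - h (upd p i 0))).
- by move=> p s /=; rewrite Ha.
- by move=> p s /=; rewrite Hb.
- by move=> p s /=; rewrite !upd_upd.
- by move=> p /=; rewrite (H p); ring.
Qed.

Lemma Quad_AffM i h g c d : Aff i h c -> Aff i g d ->
  Quad i (fun p => h p * g p) (fun p => c p * d p).
Proof.
move=> [Hc H] [Hd G].
apply: (@Quad_intro _ _ _ (fun p => c p * g (upd p i 0) + h (upd p i 0) * d p)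
   (fun p => h (upd p i 0) * g (upd p i 0))).
- by move=> p s /=; rewrite Hc Hd.
- by move=> p s /=; rewrite Hc Hd !upd_upd.
- by move=> p s /=; rewrite !upd_upd.
- by move=> p /=; rewrite (H p) (G p); ring.
Qed.

Lemma Aff_zero i h c : Aff i h c -> (forall p, h p = 0) -> forall p, c p = 0.
Proof.
move=> [Hc H] Z p; have := H (upd p i 1).
by rewrite !Z upd_at mul1r Hc addr0 => /esym.
Qed.

Lemma Quad_zero i h a : Quad i h a -> (forall p, h p = 0) -> forall p, a p = 0.
Proof.
move=> [Ha [b [Hb H]]] Z p.
have h1 := H (upd p i 1); have h2 := H (upd p i (-1)).
rewrite !Z upd_at Ha Hb addr0 in h1; rewrite !Z upd_at Ha Hb addr0 in h2.
lra.
Qed.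

Lemma Dv_at i f p s : Dv i f -> derivable (fun t => f (upd p i t)) s 1.
Proof.
move=> D; have := D (upd p i s); rewrite upd_at.
have -> : (fun t => f (upd (upd p i s) i t)) = (fun t => f (upd p i t)).
  by apply/funext => t; rewrite upd_upd.
by [].
Qed.

Lemma pd_at i f p s : pd i f (upd p i s) = derive1 (fun t => f (upd p i t)) s.
Proof.
rewrite /pd upd_at; congr (derive1 _ _); apply/funext => t; by rewrite upd_upd.
Qed.

Lemma Dv_Ind i k : Ind i k -> Dv i k.
Proof.
move=> H p; have -> : (fun s => k (upd p i s)) = cst (k p) by apply/funext => s; rewrite H.
exact: derivable_cst.
Qed.

Lemma Dv_add i f g : Dv i f -> Dv i g -> Dv i (fun p => f p + g p).
Proof. by move=> Df Dg p; apply: (derivableD (Df p) (Dg p)). Qed.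

Lemma Dv_mul i f g : Dv i f -> Dv i g -> Dv i (fun p => f p * g p).
Proof. by move=> Df Dg p; apply: (derivableM (Df p) (Dg p)). Qed.

Lemma pd_add i f g p : Dv i f -> Dv i g ->
  pd i (fun p => f p + g p) p = pd i f p + pd i g p.
Proof.
move=> Df Dg; rewrite /pd !derive1E.
exact: (deriveD (Df p) (Dg p)).
Qed.

Lemma pd_mul i f g p : Dv i f -> Dv i g ->
  pd i (fun p => f p * g p) p = f p * pd i g p + g p * pd i f p.
Proof.
move=> Df Dg; rewrite /pd !derive1E.
by rewrite (deriveM (Df p) (Dg p)) /= upd_id.
Qed.

Lemma pd_Indmul i k f p : Ind i k -> Dv i f ->
  pd i (fun p => k p * f p) p = k p * pd i f p.
Proof.
move=> Hk Df; rewrite pd_mul //; last exact: Dv_Ind.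
by rewrite (Ind_pd0 _ Hk) mulr0 addr0.
Qed.

Lemma pd_Aff i j h c : Aff i h c -> j != i -> Dv j c -> Dv j h ->
  Aff i (pd j h) (pd j c).
Proof.
move=> [Hc H] ji Dc Dh; split; first by apply: Ind_pd; rewrite // eq_sym.
move=> p; rewrite {1}/pd.
have -> : (fun s => h (upd p j s)) =
   (fun s => p i * c (upd p j s)) + (fun s => h (upd (upd p i 0) j s)).
  apply/funext => s /=; rewrite (H (upd p j s)) (upd_C _ _ _ ji) upd_ne //.
  by rewrite eq_sym.
rewrite derive1E deriveD.
- rewrite (deriveMl _ (Dc p)) /pd !derive1E upd_ne //.
- exact: derivableZ (Dc p).
- by have := Dh (upd p i 0); rewrite upd_ne.
Qed.


Lemma const_of_pd0 i f : Dv i f -> (forall p, pd i f p = 0) -> Ind i f.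
Proof.
move=> D Z p s.
have := @is_derive_0_is_cst R (fun t => f (upd p i t)) s (p i).
rewrite upd_id; apply => x; split; first exact: Dv_at.
by rewrite -derive1E -pd_at Z.
Qed.

Lemma affine_of_Ind_pd i f p s : Dv i f -> Ind i (pd i f) ->
  f (upd p i s) = f p + (s - p i) * pd i f p.
Proof.
move=> D Hc; set c := pd i f p.
have Hd : forall x, is_derive x (1:R) (fun t => f (upd p i t)) c.
  move=> x; split; first exact: Dv_at.
  by rewrite -derive1E -pd_at /c Hc.
have Hg : forall x, is_derive x (1:R) ((fun t => f (upd p i t)) - (@id R) * cst c) 0.
  move=> x; have Hdx := Hd x.
  have H : is_derive x (1:R) ((fun t => f (upd p i t)) - (@id R) * cst c) (c - (x *: 0 + c *: 1)).
    by apply: is_deriveB.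
  have E : c - (x *: 0 + c *: 1) = 0 by rewrite scaler0 add0r scaler1 subrr.
  by rewrite E in H.
have := @is_derive_0_is_cst R _ s (p i) Hg.
rewrite !fctE /= upd_id => E.
rewrite -[f (upd p i s)](subrK (s * c)) E; ring.
Qed.

Fixpoint Smn n f : Prop :=
  match n with 0 => True | n.+1 => (forall j, Dv j f) /\ (forall j, Smn n (pd j f)) end.
Definition Sm f := forall n, Smn n f.

Lemma Smn_mono n f : Smn n.+1 f -> Smn n f.
Proof.
elim: n f => [//|n IH] f [D P]; split => // j; exact: IH.
Qed.

Lemma pd_cstE j (c : R) : pd j (fun _ => c) = (fun _ => 0).
Proof. by apply/funext => p; rewrite Ind_pd0. Qed.

Lemma Smn_cst n (c : R) : Smn n (fun _ => c).
Proof.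
elim: n c => [//|n IH] c; split => j; first exact: Dv_Ind.
by rewrite pd_cstE.
Qed.

Lemma Smn_coord n i : Smn n (fun p => p i).
Proof.
case: n => [//|n]; split => j.
  case: (eqVneq i j) => [<-|ij]; last by apply: Dv_Ind; apply: Ind_coord.
  move=> p; have -> : (fun s => upd p i s i) = (@id R) by apply/funext => s; rewrite upd_at.
  exact: derivable_id.
case: (eqVneq i j) => [<-|ij].
  have -> : pd i (fun p => p i) = (fun _ => 1).
    by apply/funext => p; apply: (@pd_aff _ _ _ _ 0) => s; rewrite upd_at mulr1 addr0.
  exact: Smn_cst.
have -> : pd j (fun p => p i) = (fun _ => 0).
  by apply/funext => p; apply: Ind_pd0; apply: Ind_coord.
exact: Smn_cst.
Qed.

Lemma SmnD n f g : Smn n f -> Smn n g -> Smn n (fun p => f p + g p).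
Proof.
elim: n f g => [//|n IH] f g [Df Pf] [Dg Pg]; split => j.
  exact: Dv_add.
have -> : pd j (fun p => f p + g p) = (fun p => pd j f p + pd j g p).
  by apply/funext => p; rewrite pd_add.
exact: IH (Pf j) (Pg j).
Qed.

Lemma SmnM n f g : Smn n f -> Smn n g -> Smn n (fun p => f p * g p).
Proof.
elim: n f g => [//|n IH] f g Hf Hg.
have Hf' := Smn_mono Hf; have Hg' := Smn_mono Hg.
case: Hf => Df Pf; case: Hg => Dg Pg; split => j.
  exact: Dv_mul.
have -> : pd j (fun p => f p * g p) = (fun p => f p * pd j g p + g p * pd j f p).
  by apply/funext => p; rewrite pd_mul.
by apply: SmnD; apply: IH => //; [exact: Pg | exact: Pf].
Qed.

Lemma Smn_sum n K (F : nat -> jet R -> R) : (forall k, Smn n (F k)) ->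
  Smn n (fun p => \sum_(k < K) F k p).
Proof.
move=> H; elim: K => [|K IH].
  have -> : (fun p => \sum_(k < 0) F k p) = (fun _ => 0).
    by apply/funext => p; rewrite big_ord0.
  exact: Smn_cst.
have -> : (fun p => \sum_(k < K.+1) F k p) = (fun p => \sum_(k < K) F k p + F K p).
  by apply/funext => p; rewrite big_ord_recr.
exact: SmnD.
Qed.

Lemma Sm_pd j f : Sm f -> Sm (pd j f).
Proof. by move=> H n; case: (H n.+1) => _; apply. Qed.

Lemma Sm_Dv j f : Sm f -> Dv j f.
Proof. by move=> H; case: (H 1%N). Qed.

Lemma SmD f g : Sm f -> Sm g -> Sm (fun p => f p + g p).
Proof. by move=> Hf Hg n; apply: SmnD. Qed.

Lemma SmM f g : Sm f -> Sm g -> Sm (fun p => f p * g p).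
Proof. by move=> Hf Hg n; apply: SmnM. Qed.

Lemma Sm_Dx f : Sm f -> Sm (Dx f).
Proof.
move=> H n; rewrite /Dx; apply: SmnD; first exact: Sm_pd.
apply: (@Smn_sum n _ (fun k p => p k.+3 * pd k.+2 f p)) => k.
apply: SmnM; first exact: Smn_coord.
exact: Sm_pd.
Qed.

Lemma Sm_iterDx k F : Sm F -> Sm (iter k (@Dx R) F).
Proof. by move=> H; elim: k => [//|k IH] /=; apply: Sm_Dx. Qed.


Definition liftG N (G : 'rV[R]_N -> R) : jet R -> R := fun p => G (\row_(k < N) p k).

Lemma row_upd N p j s (hj : (j < N)%N) :
  \row_(k < N) upd p j s k = (s - p j) *: delta_mx ord0 (Ordinal hj) + \row_(k < N) p k.
Proof.
apply/rowP => k; rewrite !mxE /upd eqxx /=.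
case: (eqVneq (k:nat) j) => [E|E].
  have -> : k == Ordinal hj by apply/eqP/val_inj.
  by rewrite E mulr1 subrK.
have -> : (k == Ordinal hj) = false by apply/negbTE; apply: contra E => /eqP ->.
by rewrite mulr0 add0r.
Qed.

Lemma row_upd_ge N p j s : (N <= j)%N -> \row_(k < N) upd p j s k = \row_(k < N) p k.
Proof.
move=> Nj; apply/rowP => k; rewrite !mxE upd_ne //.
by apply/negP => /eqP E; have := ltn_ord k; rewrite E ltnNge Nj.
Qed.

Lemma quot_eq N (G : 'rV[R]_N -> R) p j (hj : (j < N)%N) :
  (fun h : R => h^-1 *: (((fun s => liftG G (upd p j s)) \o shift (p j)) (h *: 1)
     - (fun s => liftG G (upd p j s)) (p j)))
  = (fun h : R => h^-1 *: ((G \o shift (\row_(k < N) p k)) (h *: delta_mx ord0 (Ordinal hj))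
     - G (\row_(k < N) p k))).
Proof.
apply/funext => h; rewrite /liftG /= /shift upd_id row_upd.
have -> : h *: (1:R) + p j - p j = h by rewrite addrK [LHS]mulr1.
by [].
Qed.

Lemma liftG_Ind N (G : 'rV[R]_N -> R) j : (N <= j)%N -> Ind j (liftG G).
Proof. by move=> Nj p s; rewrite /liftG row_upd_ge. Qed.

Lemma liftG_Dv N (G : 'rV[R]_N -> R) j : (forall v, differentiable G v) -> Dv j (liftG G).
Proof.
move=> dG; case: (ltnP j N) => hj; last by apply: Dv_Ind; apply: liftG_Ind.
move=> p; rewrite /derivable quot_eq.
have X := @diff_derivable _ _ _ G (\row_(k < N) p k) (delta_mx ord0 (Ordinal hj)) (dG _). exact: X.
Qed.

Lemma liftG_pd N (G : 'rV[R]_N -> R) j (hj : (j < N)%N) :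
  pd j (liftG G) = liftG ('D_(delta_mx ord0 (Ordinal hj)) G).
Proof.
apply/funext => p; rewrite /pd derive1E /derive quot_eq.
by [].
Qed.

Lemma smoothN_D N (G : 'rV[R]_N -> R) (j : 'I_N) :
  smoothN G -> smoothN ('D_(delta_mx ord0 j) G).
Proof.
move=> H l v; have := H (l ++ [:: j]) v.
by rewrite /iter_partial foldr_cat.
Qed.

Lemma Smn_liftG n N (G : 'rV[R]_N -> R) : smoothN G -> Smn n (liftG G).
Proof.
elim: n G => [//|n IH] G HG; split => j.
  by apply: liftG_Dv => v; exact: (HG [::] v).
case: (ltnP j N) => hj.
  rewrite liftG_pd; apply: IH; exact: smoothN_D.
have -> : pd j (liftG G) = (fun _ => 0).
  by apply/funext => p; apply: Ind_pd0; apply: liftG_Ind.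
exact: Smn_cst.
Qed.

Lemma Sm_of_smooth f : smooth_dfun f -> Sm f.
Proof.
move=> [N [Hb Hs]].
have -> : f = liftG (fun v : 'rV[R]_N => f (ext v)).
  apply/funext => p; rewrite /liftG; apply: Hb => i hi.
  by rewrite /ext insubT /= mxE.
by move=> n; apply: Smn_liftG.
Qed.


Lemma Dx_Aff m h : depends_below m.+3 h -> Aff m.+3 (Dx h) (pd m.+2 h).
Proof.
move=> Hb.
apply: (@Aff_intro _ _ _ (fun p => pd 1 h p + \sum_(j < m) p j.+3 * pd j.+2 h p)).
- exact: below_Ind (below_pd _ Hb) _.
- move=> p s /=; rewrite (below_Ind (below_pd 1 Hb)) //; congr (_ + _).
  apply: eq_bigr => j _; have hj := ltn_ord j.
  rewrite (below_Ind (below_pd _ Hb)) // upd_ne //; apply/eqP; lia.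
- move=> p; rewrite (Dx_bound (K := m.+1) _ Hb) big_ord_recr /=; ring.
Qed.

Lemma Aff_idx i i' h c : Aff i h c -> i = i' -> Aff i' h c.
Proof. by move=> H <-. Qed.

Lemma below_idx K K' f : depends_below K f -> K = K' -> depends_below K' f.
Proof. by move=> H <-. Qed.

Section Fsec.
Variable F : jet R -> R.
Hypothesis HF5 : depends_below 5 F.
Hypothesis SF : Sm F.

Lemma iterDx_below k : depends_below (k + 5) (iter k (@Dx R) F).
Proof.
elim: k => [//|k IH] /=.
apply: below_idx (below_Dx (K := k.+3) (below_idx IH _)) _; lia.
Qed.

Lemma iterP k : Aff (k + 5) (iter k.+1 (@Dx R) F) (pd 4 F).
Proof.
elim: k => [|k IH].
  exact: (Dx_Aff (m := 2) HF5).
have H := Dx_Aff (m := k.+3) (below_idx (@iterDx_below k.+1) _).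
apply: Aff_idx; last by (instantiate (1 := k.+3.+3); lia).
apply: Aff_c (H _) _; first by lia.
by move=> p; rewrite (Aff_pd _ (Aff_idx IH _)) //; lia.
Qed.

End Fsec.
End J.

Section J.
Variable R : realType.
Implicit Types (f g h : jet R -> R) (p q : jet R).
Section Fsec.
Variable F : jet R -> R.
Hypothesis HF5 : depends_below 5 F.
Hypothesis SF : Sm F.
Lemma phi_Ind i : (5 <= i)%N -> Ind i (pd 4 F).
Proof. by move=> hi; apply: below_Ind (below_pd 4 HF5) hi. Qed.

Lemma iterP' k : exists c, Aff (k.+3).+3 (iter k.+3 (@Dx R) F) c.
Proof.
set h := iter k.+2 (@Dx R) F.
have Hh : Aff (k.+3).+3 h (pd 4 F) by apply: Aff_idx (iterP HF5 k.+1) _; lia.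
have Hb : depends_below (k.+3).+4 h.
  have H0 := iterDx_below (k:=k.+2) HF5; rewrite -/h in H0.
  apply: below_mono H0 _; lia.
have Sh : Sm h by apply: Sm_iterDx.
have Sphi : Sm (pd 4 F) by apply: Sm_pd.
have E : iter k.+3 (@Dx R) F = fun p => ((pd 1 h p + \sum_(j < k.+3) p j.+3 * pd j.+2 h p)
     + p (k.+3).+3 * pd (k.+3).+2 h p) + p (k.+4).+3 * pd (k.+4).+2 h p.
  apply/funext => p; have -> : iter k.+3 (@Dx R) F p = Dx h p by [].
  by rewrite (Dx_bound p Hb) 2!big_ord_recr /= !addrA.
rewrite E.
have [c2 A2] : exists c, Aff (k.+3).+3 (fun p => \sum_(j < k.+3) p j.+3 * pd j.+2 h p) c.
  apply: (Aff_sum (F := fun j p => p j.+3 * pd j.+2 h p)) => j hj.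
  eexists; apply: AffMl; first by apply: Ind_coord; apply/eqP; lia.
  apply: pd_Aff Hh _ (Sm_Dv Sphi) (Sm_Dv Sh); apply/eqP; lia.
have A1 : Aff (k.+3).+3 (pd 1 h) (pd 1 (pd 4 F)).
  by apply: pd_Aff Hh _ (Sm_Dv Sphi) (Sm_Dv Sh).
have I3 : Ind (k.+3).+3 (pd (k.+3).+2 h).
  apply: Ind_of_Aff0 (pd_Aff Hh _ (Sm_Dv Sphi) (Sm_Dv Sh)) _.
    by apply/eqP; lia.
  by move=> p; apply: Ind_pd0; apply: phi_Ind.
have A3 := AffMr I3 (@Aff_coord R (k.+3).+3).
have I4 : Ind (k.+3).+3 (fun p => p (k.+4).+3 * pd (k.+4).+2 h p).
  move=> p s; rewrite (Aff_pd (upd p _ s) Hh) (Aff_pd p Hh).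
  rewrite (@phi_Ind (k.+3).+3 _ p s); last by lia.
  by rewrite upd_ne //; apply/eqP; lia.
eexists; apply: AffD (Aff_Ind I4).
exact: (AffD (AffD A1 A2) A3).
Qed.

Lemma iterF_Aff k i : ((k + 5 <= i)%N \/ (i = k + 4 /\ (1 <= k)%N) \/ (i = k + 3 /\ (3 <= k)%N)) ->
  exists c, Aff i (iter k (@Dx R) F) c.
Proof.
case=> [hi|[[-> hk]|[-> hk]]].
- exists (fun _ => 0); apply: Aff_Ind; exact: below_Ind (iterDx_below (k:=k) HF5) hi.
- exists (pd 4 F); case: k hk => [//|k] _; apply: Aff_idx (iterP HF5 k) _; lia.
- case: k hk => [|[|[|k]]] // _; have [c Hc] := iterP' k.
  by exists c; apply: Aff_idx Hc _; lia.
Qed.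

End Fsec.
End J.

Section Main.
Variable R : realType.
Implicit Types (f g h : jet R -> R) (p q : jet R).
Variables (F r a1 a2 b1 b2 b3 : jet R -> R).
Hypotheses (HF5 : depends_below 5 F) (SF : Sm F) (Hphi : forall p, Fuxx F p != 0).
Hypotheses (Sr : Sm r) (Sa1 : Sm a1) (Sa2 : Sm a2).
Hypotheses (Hr0 : forall p, r p != 0) (Ha20 : forall p, a2 p != 0).
Hypotheses (HS1 : forall p, S1 F a1 a2 b1 b2 b3 p = 0)
  (HS2 : forall p, S2 F a1 a2 b1 b2 b3 p = 0)
  (HS3 : forall p, S3 F a1 a2 b1 b2 b3 p = 0)
  (HT1 : forall p, T1 F r a2 p = 0)
  (HT2 : forall p, T2 F a1 a2 b3 p = 0)
  (HT3 : forall p, T3 F r a2 b2 p = 0).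

Lemma phi5 : depends_below 5 (Fuxx F).
Proof. rewrite /Fuxx. have X := (below_pd 4 HF5). exact X. Qed.

Lemma DtAff1 m f : depends_below m.+4.+2 f -> exists c, Aff m.+4.+2 (Dt F f) c.
Proof.
move=> Hf.
have -> : Dt F f = fun p => pd 0 f p + \sum_(k < m.+4) iter k (@Dx R) F p * pd k.+2 f p.
  by apply/funext => p; rewrite (Dt_bound F p Hf).
have [c Hc] : exists c, Aff m.+4.+2 (fun p => \sum_(k < m.+4) iter k (@Dx R) F p * pd k.+2 f p) c.
  apply: (Aff_sum (F := fun k p => iter k (@Dx R) F p * pd k.+2 f p)) => k hk.
  have [c Hc] : exists c, Aff m.+4.+2 (iter k (@Dx R) F) c.
    apply: (iterF_Aff (k := k) (i := m.+4.+2) HF5 SF).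
    case: (leqP (k + 5) m.+4.+2) => h1; first by left.
    right; case: (leqP k m.+2) => h2; first by left; split; lia.
    by right; split; lia.
  eexists; apply: AffMr Hc.
  exact: below_Ind (below_pd _ Hf) _.
eexists; apply: AffD Hc.
apply: Aff_Ind; exact: below_Ind (below_pd _ Hf) _.
Qed.

Lemma DtAff2 m f : depends_below m.+4.+2 f ->
  Aff m.+4.+3 (Dt F f) (fun p => 0 + pd 4 F p * pd m.+4.+1 f p).
Proof.
move=> Hf.
have -> : Dt F f = fun p => (pd 0 f p + \sum_(k < m.+3) iter k (@Dx R) F p * pd k.+2 f p)
    + iter m.+3 (@Dx R) F p * pd m.+4.+1 f p.
  by apply/funext => p; rewrite (Dt_bound F p Hf) big_ord_recr /= addrA.
apply: AffD.
  apply: Aff_Ind => p s /=.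
  rewrite (below_Ind (below_pd 0 Hf)) //; congr (_ + _).
  apply: eq_bigr => k _; have hk := ltn_ord k.
  rewrite (below_Ind (below_pd _ Hf)); last by lia.
  by rewrite (below_Ind (iterDx_below (k:=k) HF5)) //; lia.
apply: AffMr; first exact: below_Ind (below_pd _ Hf) _.
by apply: Aff_idx (iterP HF5 m.+2) _; lia.
Qed.


Lemma stepT1 m : depends_below m.+4.+2 r -> depends_below m.+4.+2 a2 -> Ind m.+4.+1 r.
Proof.
move=> Hr Ha.
have Hphi5 := phi5.
have le5 : (5 <= m.+4.+2)%N by lia.
pose psi := fun q => Fuxx F q * r q.
have Hpsi : depends_below m.+4.+2 psi.
  by move=> p q E; rewrite /psi (Hr _ _ E) (below_mono Hphi5 le5 E).
have Spsi : Sm psi.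
  by apply: SmM; [exact: (Sm_pd 4 SF) | exact: Sr].
have Apsi : Aff m.+4.+2 (Dx psi) (pd m.+4.+1 psi) := Dx_Aff (m := m.+3) Hpsi.
pose H := Dx psi.
have HbH : depends_below m.+4.+3 H := below_Dx (K := m.+4) Hpsi.
have SH : Sm H := Sm_Dx Spsi.
have Spp : Sm (pd m.+4.+1 psi) := Sm_pd _ Spsi.
have ne1 : (m.+4.+1 != m.+4.+2) by apply/eqP; lia.
have A3 : Aff m.+4.+2 (pd m.+4.+1 H) (pd m.+4.+1 (pd m.+4.+1 psi)).
  exact: (pd_Aff Apsi ne1 (Sm_Dv Spp) (Sm_Dv SH)).
have A1 : Aff m.+4.+2 (pd 1 H) (pd 1 (pd m.+4.+1 psi)).
  have ne0 : (1 != m.+4.+2) by apply/eqP; lia.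
  exact: (pd_Aff Apsi ne0 (Sm_Dv Spp) (Sm_Dv SH)).
have [c2 A2] : exists c, Aff m.+4.+2 (fun p => \sum_(j < m.+3) p j.+3 * pd j.+2 H p) c.
  apply: (Aff_sum (F := fun j p => p j.+3 * pd j.+2 H p)) => j hj.
  eexists; apply: AffMl; first by apply: Ind_coord; apply/eqP; lia.
  apply: (pd_Aff Apsi _ (Sm_Dv Spp) (Sm_Dv SH)); apply/eqP; lia.
have I4 : Ind m.+4.+2 (fun p => p m.+4.+3 * pd m.+4.+2 H p).
  move=> p s; rewrite (Aff_pd (upd p _ s) Apsi) (Aff_pd p Apsi).
  rewrite (below_Ind (below_pd _ Hpsi) (leqnn _) p s).
  by rewrite upd_ne //; apply/eqP; lia.
have EH : Dx H = fun p => ((pd 1 H p + \sum_(j < m.+3) p j.+3 * pd j.+2 H p)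
    + p m.+4.+2 * pd m.+4.+1 H p) + p m.+4.+3 * pd m.+4.+2 H p.
  by apply/funext => p; rewrite (Dx_bound p HbH) 2!big_ord_recr /= !addrA.
have QH : Quad m.+4.+2 (Dx H) (fun p => 0 + 0 + 1 * pd m.+4.+1 (pd m.+4.+1 psi) p + 0).
  rewrite EH.
  exact: (QuadD (QuadD (QuadD (Quad_Aff A1) (Quad_Aff A2))
     (Quad_AffM (@Aff_coord R m.+4.+2) A3)) (Quad_Aff (Aff_Ind I4))).
have [cDt ADt] := DtAff1 Hr.
have Hxi : depends_below m.+4.+2 (fun q => Fux F q * r q).
  move=> p q E; rewrite (Hr _ _ E) /Fux (below_pd 3 (below_mono HF5 le5) E) //.
have AXi := Dx_Aff (m := m.+3) Hxi.
have I_Fur : Ind m.+4.+2 (fun p => Fu F p * r p).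
  move=> p s /=; rewrite (below_Ind Hr (leqnn _) p s) /Fu.
  by rewrite (below_Ind (below_pd 2 HF5) le5 p s).
have I_last : Ind m.+4.+2 (fun p => 4 * Fuxx F p * r p * a2 p ^+ 2).
  move=> p s /=; rewrite (below_Ind Hr (leqnn _) p s) (below_Ind Ha (leqnn _) p s).
  by rewrite (below_Ind Hphi5 le5 p s).
have QT : Quad m.+4.+2 (T1 F r a2)
   (fun p => - 0 - 0 + 0 - (0 + 0 + 1 * pd m.+4.+1 (pd m.+4.+1 psi) p + 0) - 0).
  exact: (QuadB (QuadB (QuadD (QuadB (QuadN (Quad_Aff ADt)) (Quad_Aff (Aff_Ind I_Fur)))
     (Quad_Aff AXi)) QH) (Quad_Aff (Aff_Ind I_last))).
have Z := Quad_zero QT HT1.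
have L0 : forall p, pd m.+4.+1 (pd m.+4.+1 psi) p = 0.
  by move=> p; have := Z p; rewrite /= => h; lra.
have Ipp : Ind m.+4.+1 (pd m.+4.+1 psi) := const_of_pd0 (Sm_Dv Spp) L0.
have c0 : forall p, pd m.+4.+1 psi p = 0.
  move=> p; apply/eqP; apply/negPn/negP => hc.
  have := affine_of_Ind_pd p (p m.+4.+1 - psi p / pd m.+4.+1 psi p) (Sm_Dv Spsi) Ipp.
  rewrite addrAC subrr add0r mulNr divfK // subrr /psi => /eqP.
  by rewrite mulf_eq0 (negbTE (Hphi _)) (negbTE (Hr0 _)).
have Ipsi : Ind m.+4.+1 psi := const_of_pd0 (Sm_Dv Spsi) c0.
move=> p s; have := Ipsi p s; rewrite /psi.
rewrite (below_Ind Hphi5 _ p s); last by lia.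
exact: (mulfI (Hphi p)).
Qed.


Lemma b2E p : b2 p = Fux F p * a2 p - 2 * Dx (Fuxx F) p * a2 p
   - 2 * (Dx r p / r p) * Fuxx F p * a2 p - Fuxx F p * Dx a2 p.
Proof. have := HT3 p; rewrite /T3 => h; lra. Qed.

Lemma b3E p : b3 p = 2 * Fuxx F p * a1 p * a2 p.
Proof. have := HT2 p; rewrite /T2 => h; lra. Qed.

Lemma b1E p : b1 p = (2 * a1 p * b2 p - Dx b3 p) / (2 * a2 p).
Proof.
have h := HS3 p; rewrite /S3 in h.
have e : b1 p * (2 * a2 p) = 2 * a1 p * b2 p - Dx b3 p by lra.
rewrite -e mulfK //; apply: mulf_neq0 => //; exact: Ha20.
Qed.

Lemma phiDx6 : depends_below 6 (Dx (Fuxx F)).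
Proof. exact: (below_Dx (K := 3) phi5). Qed.

Lemma b2_below K : depends_below K.+2 r -> depends_below K.+2 a2 -> (5 <= K.+2)%N ->
  depends_below K.+3 b2.
Proof.
move=> Hr Ha le5 p q E.
have E' : forall i, (i < K.+2)%N -> p i = q i by move=> i hi; apply: E; lia.
rewrite !b2E (below_Dx Hr E) (below_Dx Ha E) (Hr _ _ E') (Ha _ _ E').
rewrite (below_mono phiDx6 _ E); last by lia.
rewrite /Fux (below_pd 3 (below_mono HF5 le5) E').
by rewrite (below_mono phi5 le5 E').
Qed.

Lemma b3_below K : depends_below K a1 -> depends_below K a2 -> (5 <= K)%N ->
  depends_below K b3.
Proof.
move=> H1 H2 le5 p q E.
by rewrite !b3E (H1 _ _ E) (H2 _ _ E) (below_mono phi5 le5 E).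
Qed.

Lemma b1_below K : depends_below K.+2 r -> depends_below K.+2 a1 -> depends_below K.+2 a2 ->
  (5 <= K.+2)%N -> depends_below K.+3 b1.
Proof.
move=> Hr H1 H2 le5 p q E.
have E' : forall i, (i < K.+2)%N -> p i = q i by move=> i hi; apply: E; lia.
have Hb3 := b3_below H1 H2 le5.
by rewrite !b1E (b2_below Hr H2 le5 E) (below_Dx Hb3 E) (H1 _ _ E') (H2 _ _ E').
Qed.

Lemma b2Aff m : depends_below m.+4.+2 r -> depends_below m.+4.+2 a2 -> Ind m.+4.+1 r ->
  Aff m.+4.+2 b2 (fun p => - pd 4 F p * pd m.+4.+1 a2 p).
Proof.
move=> Hr Ha IrN.
have le5 : (5 <= m.+4.+2)%N by lia.
have [_ Er] := Dx_Aff (m := m.+3) Hr.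
have [_ Ea] := Dx_Aff (m := m.+3) Ha.
split.
  move=> p s; rewrite (below_Ind (below_pd _ Ha) (leqnn _) p s).
  by rewrite (below_Ind (below_pd 4 HF5) le5 p s).
move=> p; rewrite !b2E (Er p) (Ea p) (Ind_pd0 p IrN).
rewrite (below_Ind Hr (leqnn _) p 0) (below_Ind Ha (leqnn _) p 0).
rewrite (below_Ind phi5 le5 p 0) (below_Ind (below_mono phiDx6 _) (leqnn _) p 0); last by lia.
rewrite /Fux (below_Ind (below_pd 3 HF5) le5 p 0) /Fuxx.
ring.
Qed.


Lemma stepS2 m : depends_below m.+4.+2 r -> depends_below m.+4.+2 a1 -> depends_below m.+4.+2 a2 ->
  Ind m.+4.+1 r -> Ind m.+4.+1 a2.
Proof.
move=> Hr H1 Ha IrN.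
have le5 : (5 <= m.+4.+2)%N by lia.
have Hb2 : depends_below m.+4.+3 b2 := b2_below (K := m.+4) Hr Ha le5.
have Hb3 : depends_below m.+4.+2 b3 := b3_below H1 Ha le5.
have A2 := b2Aff Hr Ha IrN.
have ADt := DtAff2 Ha.
have ADx := Dx_Aff (m := m.+4) Hb2.
have le67 : (m.+4.+2 <= m.+4.+3)%N by [].
have I3 : Ind m.+4.+3 (fun p => 2 * a1 p * b3 p).
  by move=> p s /=; rewrite (below_Ind H1 le67 p s) (below_Ind Hb3 le67 p s).
have AS := AffB (AffD (AffN ADt) ADx) (Aff_Ind I3).
have Z := Aff_zero AS HS2.
have key : forall p, pd m.+4.+1 a2 p = 0.
  move=> p; have := Z p; rewrite /= (Aff_pd p A2) => h.
  have e : pd 4 F p * pd m.+4.+1 a2 p = 0 by lra.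
  have hp : pd 4 F p != 0 := Hphi p.
  by move/eqP: e; rewrite mulf_eq0 (negbTE hp) => /eqP.
exact: const_of_pd0 (Sm_Dv Sa2) key.
Qed.

Lemma stepS1 m : depends_below m.+4.+2 r -> depends_below m.+4.+2 a1 -> depends_below m.+4.+2 a2 ->
  Ind m.+4.+1 r -> Ind m.+4.+1 a2 -> Ind m.+4.+1 a1.
Proof.
move=> Hr H1 Ha IrN IaN.
have le5 : (5 <= m.+4.+2)%N by lia.
have A2 := b2Aff Hr Ha IrN.
have Ib2 : Ind m.+4.+2 b2.
  by apply: Ind_of_Aff0 A2 _ => p; rewrite (Ind_pd0 p IaN) mulr0.
have Hb3 : depends_below m.+4.+2 b3 := b3_below H1 Ha le5.
have [_ Eb3] := Dx_Aff (m := m.+3) Hb3.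
have A1 : Aff m.+4.+2 b1 (fun p => - pd m.+4.+1 b3 p / (2 * a2 p)).
  split.
    move=> p s; rewrite (below_Ind (below_pd _ Hb3) (leqnn _) p s).
    by rewrite (below_Ind Ha (leqnn _) p s).
  move=> p; rewrite !b1E (Eb3 p) (below_Ind H1 (leqnn _) p 0) (Ib2 p 0).
  rewrite (below_Ind Ha (leqnn _) p 0); ring.
have Ik : Ind m.+4.+1 (fun p => 2 * Fuxx F p * a2 p).
  move=> p s /=; rewrite (IaN p s) (below_Ind phi5 _ p s) //; lia.
have Eb3f : b3 = fun p => (2 * Fuxx F p * a2 p) * a1 p.
  by apply/funext => p; rewrite b3E; ring.
have Pb3 : forall p, pd m.+4.+1 b3 p = 2 * Fuxx F p * a2 p * pd m.+4.+1 a1 p.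
  by move=> p; rewrite Eb3f (pd_Indmul p Ik (Sm_Dv Sa1)).
have Hb1 : depends_below m.+4.+3 b1 := b1_below (K := m.+4) Hr H1 Ha le5.
have ADt := DtAff2 H1.
have ADx := Dx_Aff (m := m.+4) Hb1.
have le67 : (m.+4.+2 <= m.+4.+3)%N by [].
have I3 : Ind m.+4.+3 (fun p => 2 * a2 p * b3 p).
  by move=> p s /=; rewrite (below_Ind Ha le67 p s) (below_Ind Hb3 le67 p s).
have AS := AffD (AffD (AffN ADt) ADx) (Aff_Ind I3).
have Z := Aff_zero AS HS1.
have key : forall p, pd m.+4.+1 a1 p = 0.
  move=> p; have := Z p; rewrite /= (Aff_pd p A1) Pb3 => h.
  have hp : pd 4 F p != 0 := Hphi p.
  have e1 : 2 * Fuxx F p * a2 p * pd m.+4.+1 a1 p = (pd 4 F p * pd m.+4.+1 a1 p) * (2 * a2 p).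
    by rewrite /Fuxx; ring.
  rewrite e1 mulNr mulfK in h; last by apply: mulf_neq0 => //; exact: Ha20.
  have e : pd 4 F p * pd m.+4.+1 a1 p = 0 by lra.
  by move/eqP: e; rewrite mulf_eq0 (negbTE hp) => /eqP.
exact: const_of_pd0 (Sm_Dv Sa1) key.
Qed.

Lemma below_down K f : depends_below K.+1 f -> Ind K f -> depends_below K f.
Proof.
move=> H I p q E; rewrite -(I p (q K)); apply: H => i hi.
rewrite /upd; case: eqP => [->|ne] //; apply: E; move/eqP: ne; lia.
Qed.

Lemma all_below : (exists M, depends_below M r /\ depends_below M a1 /\ depends_below M a2) ->
  (depends_below 5 r /\ depends_below 5 a1 /\ depends_below 5 a2 /\ depends_below 5 b3)
  /\ (depends_below 6 b1 /\ depends_below 6 b2).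
Proof.
move=> [M [HMr [HM1 HM2]]].
have claim : forall d, depends_below (d + 5) r -> depends_below (d + 5) a1 ->
    depends_below (d + 5) a2 ->
    depends_below 5 r /\ depends_below 5 a1 /\ depends_below 5 a2.
  elim=> [|d IH] Hr H1 Ha; first by split.
  have Hr' : depends_below d.+4.+2 r by apply: below_idx Hr _; lia.
  have H1' : depends_below d.+4.+2 a1 by apply: below_idx H1 _; lia.
  have Ha' : depends_below d.+4.+2 a2 by apply: below_idx Ha _; lia.
  have IrN := stepT1 Hr' Ha'.
  have IaN := stepS2 Hr' H1' Ha' IrN.
  have I1N := stepS1 Hr' H1' Ha' IrN IaN.
  apply: IH; apply: below_idx (below_down _ _) _; try eassumption; lia.
have [Hr [H1 Ha]] := claim M (below_mono HMr (leq_addr _ _))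
   (below_mono HM1 (leq_addr _ _)) (below_mono HM2 (leq_addr _ _)).
split; first by split => //; split => //; split => //; exact: b3_below.
split.
  exact: (b1_below (K := 3) Hr H1 Ha).
exact: (b2_below (K := 3) Hr Ha).
Qed.

End Main.

Theorem proposition3 (R : realType) (F r a1 a2 b1 b2 b3 : jet R -> R) :
  (* the evolution equation u_t = F(t,x,u,u_x,u_xx), F smooth, F_{u_xx} <> 0 *)
  smooth_dfun F -> depends_below 5 F -> (forall p, Fuxx F p != 0) ->
  (* the unknowns are smooth differential functions *)
  smooth_dfun r -> smooth_dfun a1 -> smooth_dfun a2 ->
  smooth_dfun b1 -> smooth_dfun b2 -> smooth_dfun b3 ->
  (* semisimple case: r <> 0, and a_2 <> 0 *)
  (forall p, r p != 0) -> (forall p, a2 p != 0) ->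
  (* the system S_1 = S_2 = S_3 = T_1 = T_2 = T_3 = 0 *)
  (forall p, S1 F a1 a2 b1 b2 b3 p = 0) ->
  (forall p, S2 F a1 a2 b1 b2 b3 p = 0) ->
  (forall p, S3 F a1 a2 b1 b2 b3 p = 0) ->
  (forall p, T1 F r a2 p = 0) ->
  (forall p, T2 F a1 a2 b3 p = 0) ->
  (forall p, T3 F r a2 b2 p = 0) ->
  (* r, a1, a2, b3 depend only on t,x,u,u_x,u_xx ; b1, b2 also on u_xxx *)
  (depends_below 5 r /\ depends_below 5 a1 /\ depends_below 5 a2 /\
   depends_below 5 b3) /\ (depends_below 6 b1 /\ depends_below 6 b2).
Proof.
move=> sF bF Hphi sr sa1 sa2 sb1 sb2 sb3 Hr0 Ha20 HS1 HS2 HS3 HT1 HT2 HT3.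
have SF := Sm_of_smooth sF.
have Sr := Sm_of_smooth sr.
have Sa1 := Sm_of_smooth sa1.
have Sa2 := Sm_of_smooth sa2.
have Hex : exists M, depends_below M r /\ depends_below M a1 /\ depends_below M a2.
  case: sr => [Nr [Hbr _]]; case: sa1 => [N1 [Hb1 _]]; case: sa2 => [N2 [Hb2 _]].
  exists (Nr + N1 + N2); split; first by apply: below_mono Hbr _; lia.
  split; first by apply: below_mono Hb1 _; lia.
  by apply: below_mono Hb2 _; lia.
by eapply all_below; eassumption.
Qed.
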